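(* Let $R$ be a t-unital ring. Then any c-projective left $R$-module is t-flat.
   Context: Rings are associative, not necessarily unital; modules are not assumed unital. $R$ is t-unital if $R\otimes_R R\to R$ is an isomorphism. A left $R$-module $M$ is t-unital if $R\otimes_R M\to M$ is an isomorphism, a right $R$-module $N$ is t-unital if $N\otimes_R R\to N$ is an isomorphism, and a left $R$-module $P$ is c-unital if $P\to\mathrm{Hom}_R(R,P)$, $p\mapsto(r\mapsto rp)$, is an isomorphism. For t-unital $R$, the category $R\text{-}{}^{c}\mathsf{Mod}$ of c-unital left $R$-modules and the category $\mathsf{Mod}^{t}\text{-}R$ of t-unital right $R$-modules are abelian (though their kernels/cokernels may differ from those in all modules). A left $R$-module $Q$ (not necessarily c-unital) is c-projective if the functor $\mathrm{Hom}_R(Q,{-})\colon R\text{-}{}^{c}\mathsf{Mod}\to\mathsf{Ab}$ takes cokernels in $R\text{-}{}^{c}\mathsf{Mod}$ to cokernels of abelian groups. A left $R$-module $F$ (not necessarily t-unital) is t-flat if the functor ${-}\otimes_R F\colon \mathsf{Mod}^{t}\text{-}R\to\mathsf{Ab}$ takes kernels in $\mathsf{Mod}^{t}\text{-}R$ to kernels of abelian groups. *)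

(* Defs.v *)
From mathcomp Require Import all_boot all_algebra.
Set Implicit Arguments. Unset Strict Implicit. Unset Printing Implicit Defensive.
Import GRing.Theory.
Local Open Scope ring_scope.

Record nuring := NURing {
  nur_car :> zmodType;
  nur_mul : nur_car -> nur_car -> nur_car;
  nur_mulA : forall x y z, nur_mul x (nur_mul y z) = nur_mul (nur_mul x y) z;
  nur_mulDl : forall x y z, nur_mul (x + y) z = nur_mul x z + nur_mul y z;
  nur_mulDr : forall x y z, nur_mul x (y + z) = nur_mul x y + nur_mul x z }.

Record lmodule (R : nuring) := LModule {
  lm_car :> zmodType;
  lm_act : R -> lm_car -> lm_car;
  lm_actA : forall r s m, lm_act (nur_mul r s) m = lm_act r (lm_act s m);
  lm_actDl : forall r s m, lm_act (r + s) m = lm_act r m + lm_act s m;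
  lm_actDr : forall r m n, lm_act r (m + n) = lm_act r m + lm_act r n }.

Record rmodule (R : nuring) := RModule {
  rm_car :> zmodType;
  rm_act : rm_car -> R -> rm_car;
  rm_actA : forall n r s, rm_act n (nur_mul r s) = rm_act (rm_act n r) s;
  rm_actDl : forall n m r, rm_act (n + m) r = rm_act n r + rm_act m r;
  rm_actDr : forall n r s, rm_act n (r + s) = rm_act n r + rm_act n s }.

Arguments lm_act {R} M r m : rename.
Arguments rm_act {R} N n r : rename.

Definition lreg (R : nuring) : lmodule R :=
  @LModule R R (@nur_mul R) (fun r s m => esym (nur_mulA r s m))
    (@nur_mulDl R) (@nur_mulDr R).
Definition rreg (R : nuring) : rmodule R :=
  @RModule R R (@nur_mul R) (@nur_mulA R) (@nur_mulDl R) (@nur_mulDr R).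

Definition lhom (R : nuring) (M N : lmodule R) (f : M -> N) : Prop :=
  (forall x y, f (x + y) = f x + f y) /\
  (forall r m, f (lm_act M r m) = lm_act N r (f m)).
Definition rhom (R : nuring) (M N : rmodule R) (f : M -> N) : Prop :=
  (forall x y, f (x + y) = f x + f y) /\
  (forall m r, f (rm_act M m r) = rm_act N (f m) r).

(** Every element of N (x)_R F is a finite sum of pure tensors n (x) x
    (signs are absorbed, -(n (x) x) = (-n) (x) x), so it is represented by a
    list of pairs.  Two such lists define the same element of N (x)_R F iff
    all R-balanced biadditive maps to abelian groups agree on them (the
    universal property of the tensor product). *)
Definition balanced (R : nuring) (N : rmodule R) (F : lmodule R)
    (A : zmodType) (b : N -> F -> A) : Prop :=
  [/\ (forall n n' x, b (n + n') x = b n x + b n' x),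
      (forall n x x', b n (x + x') = b n x + b n x') &
      (forall n r x, b (rm_act N n r) x = b n (lm_act F r x))].

Definition teq (R : nuring) (N : rmodule R) (F : lmodule R)
    (s t : seq (N * F)) : Prop :=
  forall (A : zmodType) (b : N -> F -> A), balanced b ->
    \sum_(p <- s) b p.1 p.2 = \sum_(p <- t) b p.1 p.2.

(** t-unitality: the multiplication maps R (x)_R R -> R, R (x)_R M -> M,
    N (x)_R R -> N are isomorphisms (surjective and injective). *)
Definition tunital_ring (R : nuring) : Prop :=
  (forall r : R, exists s : seq (R * R), r = \sum_(p <- s) nur_mul p.1 p.2) /\
  (forall s : seq (R * R), \sum_(p <- s) nur_mul p.1 p.2 = 0 ->
     @teq R (rreg R) (lreg R) s [::]).

Definition tunital_l (R : nuring) (M : lmodule R) : Prop :=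
  (forall m : M, exists s : seq (R * M), m = \sum_(p <- s) lm_act M p.1 p.2) /\
  (forall s : seq (R * M), \sum_(p <- s) lm_act M p.1 p.2 = 0 ->
     @teq R (rreg R) M s [::]).

Definition tunital_r (R : nuring) (N : rmodule R) : Prop :=
  (forall n : N, exists s : seq (N * R), n = \sum_(p <- s) rm_act N p.1 p.2) /\
  (forall s : seq (N * R), \sum_(p <- s) rm_act N p.1 p.2 = 0 ->
     @teq R N (lreg R) s [::]).

(** c-unitality: P -> Hom_R(R, P), p |-> (r |-> r p) is an isomorphism. *)
Definition cunital (R : nuring) (P : lmodule R) : Prop :=
  (forall p : P, (forall r : R, lm_act P r p = 0) -> p = 0) /\
  (forall g : lreg R -> P, lhom g ->
     exists p : P, forall r : R, g r = lm_act P r p).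

Definition is_ccokernel (R : nuring) (P1 P2 C : lmodule R)
    (f : P1 -> P2) (g : P2 -> C) : Prop :=
  (forall x, g (f x) = 0) /\
  (forall (D : lmodule R) (h : P2 -> D), cunital D -> lhom h ->
     (forall x, h (f x) = 0) ->
     exists u : C -> D, [/\ lhom u, (forall y, u (g y) = h y) &
        (forall u' : C -> D, lhom u' -> (forall y, u' (g y) = h y) ->
           forall c, u' c = u c)]).

Definition is_tkernel (R : nuring) (N1 N2 K : rmodule R)
    (f : N1 -> N2) (k : K -> N1) : Prop :=
  (forall x, f (k x) = 0) /\
  (forall (L : rmodule R) (h : L -> N1), tunital_r L -> rhom h ->
     (forall x, f (h x) = 0) ->
     exists u : L -> K, [/\ rhom u, (forall y, k (u y) = h y) &
        (forall u' : L -> K, rhom u' -> (forall y, k (u' y) = h y) ->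
           forall l, u' l = u l)]).

(** Q is c-projective: Hom_R(Q,-) : R-^cMod -> Ab takes cokernels in R-^cMod
    to cokernels of abelian groups, i.e. for every cokernel g of f in R-^cMod,
    Hom(Q,P1) -> Hom(Q,P2) -> Hom(Q,C) -> 0 is exact. *)
Definition cprojective (R : nuring) (Q : lmodule R) : Prop :=
  forall (P1 P2 C : lmodule R) (f : P1 -> P2) (g : P2 -> C),
    cunital P1 -> cunital P2 -> cunital C -> lhom f -> lhom g ->
    is_ccokernel f g ->
    [/\ (forall psi : Q -> C, lhom psi ->
           exists phi : Q -> P2, lhom phi /\ forall q, g (phi q) = psi q),
        (forall chi : Q -> P1, lhom chi -> forall q, g (f (chi q)) = 0) &
        (forall phi : Q -> P2, lhom phi -> (forall q, g (phi q) = 0) ->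
           exists chi : Q -> P1, lhom chi /\ forall q, f (chi q) = phi q)].

(** F is t-flat: - (x)_R F : Mod^t-R -> Ab takes kernels in Mod^t-R to kernels
    of abelian groups, i.e. for every kernel k of f in Mod^t-R,
    0 -> K (x) F -> N1 (x) F -> N2 (x) F is exact. *)
Definition tflat (R : nuring) (F : lmodule R) : Prop :=
  forall (N1 N2 K : rmodule R) (f : N1 -> N2) (k : K -> N1),
    tunital_r N1 -> tunital_r N2 -> tunital_r K -> rhom f -> rhom k ->
    is_tkernel f k ->
    [/\ (forall s : seq (K * F),
           teq [seq (k p.1, p.2) | p <- s] [::] -> teq s [::]),
        (forall s : seq (K * F), teq [seq (f (k p.1), p.2) | p <- s] [::]) &
        (forall t : seq (N1 * F), teq [seq (f p.1, p.2) | p <- t] [::] ->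
           exists s : seq (K * F), teq [seq (k p.1, p.2) | p <- s] t)].

(* Main.v *)
Require Import Defs.
From HB Require Import structures.
From mathcomp Require Import all_boot all_order all_algebra.
From mathcomp Require Import boolp classical_sets.
Set Implicit Arguments. Unset Strict Implicit. Unset Printing Implicit Defensive.
Import Order.TTheory GRing.Theory Num.Theory.
Local Open Scope ring_scope.

Definition frac (x : rat) : rat := x - (Num.floor x)%:~R.

Lemma fracDz (x : rat) (z : int) : frac (x + z%:~R) = frac x.
Proof.
rewrite /frac floorDrz ?intr_int // rmorphD /=.
by rewrite intrKfloor opprD addrA [X in X - _]addrAC addrK.
Qed.

Lemma frac_id (x : rat) : 0 <= x < 1 -> frac x = x.
Proof.
move=> hx; rewrite /frac (@floor_def _ x 0) ?subr0 //.
Qed.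

Lemma frac_itv (x : rat) : 0 <= frac x < 1.
Proof.
rewrite /frac subr_ge0 floor_le /= ltrBlDl.
by have := floorD1_gt x; rewrite rmorphD /= addrC.
Qed.

Lemma fracK x : frac (frac x) = frac x.
Proof. exact/frac_id/frac_itv. Qed.

Lemma fracDl x y : frac (frac x + y) = frac (x + y).
Proof.
have -> : frac x + y = (x + y) + (- Num.floor x)%:~R by rewrite /frac rmorphN /= addrAC.
exact: fracDz.
Qed.

Definition QZ := {x : rat | frac x == x}.
HB.instance Definition _ := gen_eqMixin QZ.
HB.instance Definition _ := gen_choiceMixin QZ.

Lemma frac_in x : frac (frac x) == frac x. Proof. by rewrite fracK. Qed.
Definition qz (x : rat) : QZ := exist _ (frac x) (frac_in x).

Lemma qz_eq (a b : QZ) : sval a = sval b -> a = b.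
Proof. by case: a b => [a pa] [b pb] /= eab; subst; rewrite (Prop_irrelevance pa pb). Qed.

Lemma qzK (a : QZ) : qz (sval a) = a.
Proof. by apply: qz_eq; case: a => a /= /eqP. Qed.

Definition qz0 : QZ := qz 0.
Definition qzadd (a b : QZ) : QZ := qz (sval a + sval b).
Definition qzopp (a : QZ) : QZ := qz (- sval a).

Lemma qzaddA : associative qzadd.
Proof.
move=> a b c; apply: qz_eq => /=.
by rewrite fracDl [sval a + frac _]addrC fracDl [sval b + sval c + sval a]addrC addrA.
Qed.
Lemma qzaddC : commutative qzadd.
Proof. by move=> a b; apply: qz_eq; rewrite /= addrC. Qed.
Lemma qzadd0 : left_id qz0 qzadd.
Proof. by move=> a; apply: qz_eq; rewrite /= fracDl add0r; case: a => a /= /eqP. Qed.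
Lemma qzaddN : left_inverse qz0 qzopp qzadd.
Proof. by move=> a; apply: qz_eq; rewrite /= fracDl addNr. Qed.

HB.instance Definition _ := GRing.isZmodule.Build QZ qzaddA qzaddC qzadd0 qzaddN.

Lemma qz_val0 : sval (0 : QZ) = 0.
Proof. by rewrite /= /frac floor0 subr0. Qed.

Lemma qz_muln (y : rat) n : (qz y) *+ n = qz (y *+ n).
Proof.
elim: n => [|n IH]; first by [].
rewrite mulrS IH; apply: qz_eq => /=.
by rewrite fracDl addrC fracDl addrC -mulrS.
Qed.

Lemma qz_div (a : QZ) (m : nat) : (0 < m)%N -> exists y : QZ, y *+ m = a.
Proof.
move=> m0; case: a => a pa.
have ha : 0 <= a < 1 by rewrite -(eqP pa); exact: frac_itv.
have hm : (0 : rat) < m%:R by rewrite ltr0n.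
exists (qz (a / m%:R)); rewrite qz_muln; apply: qz_eq => /=.
rewrite -[(a / _) *+ m]mulr_natr divfK ?(gt_eqF hm) //; exact/eqP.
Qed.

Lemma qz_tors (m : nat) : (1 < m)%N -> exists y : QZ, y *+ m = 0 /\ y <> 0.
Proof.
move=> m1; have hm : (1 : rat) < m%:R by rewrite ltr1n.
have hm0 : (0 : rat) < m%:R by apply: lt_trans hm.
exists (qz (m%:R)^-1); split.
  rewrite qz_muln; apply: qz_eq.
  rewrite /= -[(_^-1) *+ m]mulr_natr mulVf ?(gt_eqF hm0) //.
move=> /(congr1 sval) /=; rewrite !frac_id ?lexx ?ltr01 //.
  by apply/eqP; rewrite invr_eq0 gt_eqF.
by rewrite invr_ge0 ltW //= invf_lt1.
Qed.

Definition subgrp (G : zmodType) (S : G -> Prop) :=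
  [/\ S 0, (forall x y, S x -> S y -> S (x + y)) & (forall x, S x -> S (- x))].
Definition addon (G : zmodType) (S : G -> Prop) (d : G -> QZ) :=
  forall x y, S x -> S y -> d (x + y) = d x + d y.

Section Ext.
Variable G : zmodType.

Lemma addon0 (S : G -> Prop) d : subgrp S -> addon S d -> d 0 = 0.
Proof.
case=> S0 _ _ ad; have := ad 0 0 S0 S0; rewrite addr0 => e.
by apply: (@addrI _ (d 0)); rewrite addr0 -e.
Qed.

Lemma addonN (S : G -> Prop) d x : subgrp S -> addon S d -> S x -> d (- x) = - d x.
Proof.
move=> sS ad Sx; have [S0 _ SN] := sS.
have := ad _ _ Sx (SN _ Sx); rewrite subrr (addon0 sS ad) => e.
by apply/eqP; rewrite -addr_eq0 addrC -e.
Qed.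

Lemma subgrpMn (S : G -> Prop) x n : subgrp S -> S x -> S (x *+ n).
Proof. by case=> S0 SD _ Sx; elim: n => [|n IH] //; rewrite mulrS; apply: SD. Qed.

Lemma addonMn (S : G -> Prop) d x n : subgrp S -> addon S d -> S x ->
  d (x *+ n) = d x *+ n.
Proof.
move=> sS ad Sx; elim: n => [|n IH]; first exact: addon0 sS ad.
by rewrite !mulrS ad ?IH //; exact: subgrpMn.
Qed.

Lemma subgrpMz (S : G -> Prop) x z : subgrp S -> S x -> S (x *~ z).
Proof.
move=> sS Sx; case: z => n; first by rewrite -pmulrn; exact: subgrpMn.
by rewrite NegzE mulrNz; have [_ _ SN] := sS; apply: SN; rewrite -pmulrn; exact: subgrpMn.
Qed.

Lemma addonMz (S : G -> Prop) d x z : subgrp S -> addon S d -> S x ->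
  d (x *~ z) = d x *~ z.
Proof.
move=> sS ad Sx; case: z => n.
  by rewrite -!pmulrn; exact: (addonMn n sS ad Sx).
rewrite NegzE !mulrNz -!pmulrn (addonN sS ad); last exact: subgrpMn.
by rewrite (addonMn _ sS ad Sx).
Qed.

Lemma ext_step (S : G -> Prop) d (g : G) (y : QZ) : subgrp S -> addon S d ->
  (forall n : nat, S (g *+ n) -> y *+ n = d (g *+ n)) ->
  exists S' d', [/\ subgrp S', addon S' d', (forall x, S x -> S' x /\ d' x = d x),
    S' g & d' g = y].
Proof.
move=> sS ad hy; have [S0 SD SN] := sS.
have hz : forall w : int, S (g *~ w) -> y *~ w = d (g *~ w).
  case=> n; first by rewrite -!pmulrn; exact: hy.
  rewrite NegzE !mulrNz -!pmulrn => /SN; rewrite opprK => Sn.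
  by rewrite hy // (addonN sS ad).
have wd : forall s s' z z', S s -> S s' -> s + g *~ z = s' + g *~ z' ->
    d s + y *~ z = d s' + y *~ z'.
  move=> s s' z z' Ss Ss' e.
  have e' : g *~ (z - z') = s' + - s.
    by rewrite mulrzBr; apply/eqP; rewrite subr_eq addrAC -e addrC addKr.
  have := hz (z - z'); rewrite e' => /(_ (SD _ _ Ss' (SN _ Ss))).
  rewrite (ad _ _ Ss' (SN _ Ss)) (addonN sS ad Ss) mulrzBr => h.
  have -> : d s' = d s + (y *~ z - y *~ z') by rewrite h addrC subrK.
  by rewrite -addrA subrK.
pose S' x := exists p : G * int, S p.1 /\ x = p.1 + g *~ p.2.
pose d' x := if pselect (S' x) is left h then
   let p := projT1 (cid h) in d p.1 + y *~ p.2 else 0.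
have d'E : forall s z, S s -> d' (s + g *~ z) = d s + y *~ z.
  move=> s z Ss; rewrite /d'; case: pselect => [h|]; last first.
    by case; exists (s, z).
  case: (cid h) => [[s1 z1] [/= Ss1 e]] /=.
  by apply: wd => //; rewrite -e.
have S'E : forall s z, S s -> S' (s + g *~ z) by move=> s z Ss; exists (s, z).
exists S', d'; split.
- split.
  + by rewrite -[0](addr0 0) -{2}(mulr0z g); apply: S'E.
  + move=> _ _ [[s z] [/= Ss ->]] [[s' z'] [/= Ss' ->]].
    have -> : s + g *~ z + (s' + g *~ z') = (s + s') + g *~ (z + z').
      by rewrite mulrzDr addrACA.
    exact/S'E/SD.
  + move=> _ [[s z] [/= Ss ->]].
    rewrite opprD -mulrNz; exact/S'E/SN.
- move=> _ _ [[s z] [/= Ss ->]] [[s' z'] [/= Ss' ->]].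
  have -> : s + g *~ z + (s' + g *~ z') = (s + s') + g *~ (z + z').
    by rewrite mulrzDr addrACA.
  by rewrite (d'E _ _ (SD _ _ Ss Ss')) !d'E // (ad _ _ Ss Ss') mulrzDr addrACA.
- move=> x Sx; split; first by rewrite -[x]addr0 -(mulr0z g); apply: S'E.
  by have := d'E x 0 Sx; rewrite !mulr0z !addr0.
- by rewrite -[g]add0r -(mulr1z g); apply: S'E.
- by rewrite -[g]add0r -(mulr1z g) d'E // (addon0 sS ad) add0r.
Qed.


Lemma minmul (P : G -> Prop) (g : G) : subgrp P ->
  exists m : nat, P (g *+ m) /\ (forall n, P (g *+ n) -> exists q, n = (q * m)%N).
Proof.
move=> sP; have [P0 PD PN] := sP.
case: (pselect (exists n, (0 < n)%N /\ P (g *+ n))) => [ex|nex]; last first.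
  exists 0%N; split; first by rewrite mulr0n.
  move=> [|n] Pn; first by exists 0%N.
  by case: nex; exists n.+1.
pose Q := fun n => (0 < n)%N && `[< P (g *+ n) >].
have exQ : exists n, Q n.
  by case: ex => n [n0 Pn]; exists n; rewrite /Q n0; apply/asboolP.
case: (ex_minnP exQ) => m /andP [m0 /asboolP Pm] minm.
exists m; split => // n Pn; exists (n %/ m)%N.
have Pr : P (g *+ (n %% m)).
  have -> : g *+ (n %% m) = g *+ n - (g *+ m) *+ (n %/ m).
    by rewrite -mulrnA [in g *+ n](divn_eq n m) mulrnDr mulnC addrAC subrr add0r.
  apply: PD => //; apply: PN; exact: subgrpMn.
case: (posnP (n %% m)) => [r0|rpos].
  by rewrite [n in LHS](divn_eq n m) r0 addn0.
have := minm (n %% m)%N; rewrite /Q rpos /=.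
have -> : `[< P (g *+ (n %% m)) >] = true by apply/asboolP.
by move=> /(_ isT); rewrite leqNgt ltn_pmod.
Qed.

Lemma extend (S : G -> Prop) d : subgrp S -> addon S d ->
  exists b : G -> QZ, (forall x y, b (x + y) = b x + b y) /\ (forall x, S x -> b x = d x).
Proof.
move=> sS ad.
pose ok (p : (G -> Prop) * (G -> QZ)) :=
  [/\ subgrp p.1, addon p.1 p.2 & forall x, S x -> p.1 x /\ p.2 x = d x].
pose T := {p | ok p}.
pose le (p q : T) := `[< forall x, (sval p).1 x -> (sval q).1 x /\ (sval q).2 x = (sval p).2 x >].
have ok0 : ok (S, d) by split.
pose t0 : T := exist _ (S, d) ok0.
have [t tmax] : exists t, premaximal le t.
  apply: (ZL_preorder t0).
  - by move=> p; apply/asboolP.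
  - move=> p q r /asboolP pq /asboolP qr; apply/asboolP => x /pq [/qr [? ->] ->]; by [].
  move=> A totA.
  case: (pselect (exists p, A p)) => [[p0 Ap0]|nA]; last first.
    by exists t0 => s As; case: nA; exists s.
  pose U x := exists p, A p /\ (sval p).1 x.
  pose u x := if pselect (U x) is left h then (sval (projT1 (cid h))).2 x else 0.
  have uE : forall p x, A p -> (sval p).1 x -> u x = (sval p).2 x.
    move=> p x Ap px; rewrite /u; case: pselect => [h|]; last by case; exists p.
    case: (cid h) => q [Aq qx] /=.
    by case: (totA p q Ap Aq) => /asboolP h1; [case: (h1 x px) | case: (h1 x qx)].
  have join : forall p q, A p -> A q -> exists r, [/\ A r, le p r & le q r].
    move=> p q Ap Aq; case: (totA p q Ap Aq) => h1.
      by exists q; split => //; apply/asboolP.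
    by exists p; split => //; apply/asboolP.
  have okU : ok (U, u).
    split.
    - split.
      + exists p0; split => //; case: (svalP p0) => -[] //.
      + move=> x y [p [Ap px]] [q [Aq qy]].
        have [r [Ar /asboolP pr /asboolP qr]] := join p q Ap Aq.
        exists r; split => //; case: (svalP r) => -[_ rD _] _ _.
        by apply: rD; [case: (pr x px) | case: (qr y qy)].
      + move=> x [p [Ap px]]; exists p; split => //.
        by case: (svalP p) => -[_ _ pN] _ _; apply: pN.
    - move=> x y [p [Ap px]] [q [Aq qy]] /=.
      have [r [Ar /asboolP pr /asboolP qr]] := join p q Ap Aq.
      have [rx _] := pr x px; have [ry _] := qr y qy.
      case: (svalP r) => -[_ rD _] rad _.
      by rewrite !(uE r) // ?rad //; apply: rD.
    - move=> x Sx; split; first by exists p0; split => //; case: (svalP p0) => _ _ /(_ x Sx) [].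
      have [p0x p0d] := (let: And3 _ _ h := svalP p0 in h) x Sx.
      by rewrite /= (uE p0).
  exists (exist _ (U, u) okU) => p Ap; apply/asboolP => x px /=; split.
    by exists p.
  exact: uE.
case: (svalP t) => -[t0' tD tN] tad tS.
have allt : forall g, (sval t).1 g.
  move=> g; apply: contrapT => ng.
  have [m [Pm hm]] := minmul g (And3 t0' tD tN).
  have [y hy] : exists y : QZ, y *+ m = (sval t).2 (g *+ m).
    case: (posnP m) => [->|mpos]; first by exists 0; rewrite mulr0n (addon0 (And3 t0' tD tN) tad).
    exact: qz_div.
  have hy' : forall n : nat, (sval t).1 (g *+ n) -> y *+ n = (sval t).2 (g *+ n).
    move=> n /hm [q ->]; rewrite mulnC !mulrnA hy; symmetry; exact: (addonMn q (And3 t0' tD tN) tad Pm).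
  have [S' [d' [sS' ad' ext S'g d'g]]] := ext_step (And3 t0' tD tN) tad hy'.
  have okS : ok (S', d').
    split => // x Sx; have [tx dx] := tS x Sx; have [S'x e] := ext x tx.
    by split => //=; rewrite e.
  have := tmax (exist _ (S', d') okS).
  have le1 : le t (exist _ (S', d') okS).
    by apply/asboolP => x tx /=; exact: ext.
  move=> /(_ le1) /asboolP /(_ g S'g) [] /=; by [].
exists (sval t).2; split.
  by move=> x y; apply: tad.
by move=> x Sx; have [] := tS x Sx.
Qed.

Lemma separate (I : G -> Prop) (t : G) : subgrp I -> ~ I t ->
  exists b : G -> QZ, [/\ (forall x y, b (x + y) = b x + b y),
     (forall x, I x -> b x = 0) & b t <> 0].
Proof.
move=> sI nIt.
have [m [Im hm]] := minmul t sI.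
have [y [hy y0]] : exists y : QZ, (forall n : nat, I (t *+ n) -> y *+ n = 0) /\ y <> 0.
  case: m Im hm => [|[|m]] Im hm.
  - have [y [_ y0]] := qz_tors (isT : (1 < 2)%N).
    by exists y; split => // n /hm [q ->]; rewrite muln0.
  - by case: nIt; rewrite -(mulr1n t).
  - have [y [ym y0]] := qz_tors (isT : (1 < m.+2)%N).
    exists y; split => // n /hm [q ->]; by rewrite mulnC mulrnA ym mul0rn.
have adI : addon I (fun _ => 0) by move=> *; rewrite addr0.
have [S' [d' [sS' ad' ext S't d't]]] := @ext_step I (fun _ => 0) t y sI adI hy.
have [b [bD bS]] := extend sS' ad'.
exists b; split => //.
  by move=> x Ix; have [S'x dx] := ext x Ix; rewrite bS.
by rewrite bS // d't.
Qed.

End Ext.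

Section Tens.
Variables (R : nuring) (N : rmodule R) (F : lmodule R).

Lemma bal0l (A : zmodType) (b : N -> F -> A) x : balanced b -> b 0 x = 0.
Proof.
case=> bD _ _; have := bD 0 0 x; rewrite addr0 => e.
by apply: (@addrI _ (b 0 x)); rewrite addr0 -e.
Qed.

Lemma balNl (A : zmodType) (b : N -> F -> A) n x : balanced b -> b (- n) x = - b n x.
Proof.
move=> bb; have [bD _ _] := bb; have := bD n (- n) x; rewrite subrr bal0l // => e.
by apply/eqP; rewrite -addr_eq0 addrC -e.
Qed.

Lemma teq_refl s : @teq R N F s s. Proof. by []. Qed.
Lemma teq_sym s t : @teq R N F s t -> teq t s.
Proof. by move=> h A b bb; rewrite h. Qed.
Lemma teq_trans s t u : @teq R N F s t -> teq t u -> teq s u.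
Proof. by move=> h1 h2 A b bb; rewrite h1 ?h2. Qed.
Lemma teq_cat s s' t t' : @teq R N F s s' -> teq t t' -> teq (s ++ t) (s' ++ t').
Proof. by move=> h1 h2 A b bb; rewrite !big_cat /= h1 ?h2. Qed.

Definition negl (s : seq (N * F)) := [seq (- p.1, p.2) | p <- s].

Lemma sum_negl (A : zmodType) (b : N -> F -> A) s : balanced b ->
  \sum_(p <- negl s) b p.1 p.2 = - \sum_(p <- s) b p.1 p.2.
Proof.
move=> bb; rewrite big_map /= -sumrN; apply: eq_bigr => p _; exact: balNl.
Qed.

Lemma teq_neg s s' : @teq R N F s s' -> teq (negl s) (negl s').
Proof. by move=> h A b bb; rewrite !sum_negl // h. Qed.

Lemma teq_negK s : @teq R N F (negl s ++ s) [::].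
Proof. by move=> A b bb; rewrite big_cat /= sum_negl // addNr big_nil. Qed.

Definition Tc := {P : seq (N * F) -> Prop | exists s, P = teq s}.
HB.instance Definition _ := gen_eqMixin Tc.
HB.instance Definition _ := gen_choiceMixin Tc.

Definition cls (s : seq (N * F)) : Tc := exist _ (teq s) (ex_intro _ s erefl).

Lemma cls_eq s t : cls s = cls t <-> @teq R N F s t.
Proof.
split.
  move=> /(congr1 sval) /= e; rewrite e; exact: teq_refl.
move=> h; apply: eq_exist; apply: funext => u; apply: propext; split.
  by move=> h2; apply: teq_trans (teq_sym h) h2.
by move=> h2; apply: teq_trans h h2.
Qed.

Definition rep (P : Tc) : seq (N * F) := projT1 (cid (svalP P)).
Lemma repK P : cls (rep P) = P.
Proof.
rewrite /rep; case: (cid _) => s /= e; case: P e => P pP /= e; subst P.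
by apply: eq_exist.
Qed.

Lemma rep_cls s : @teq R N F (rep (cls s)) s.
Proof. by apply/cls_eq; rewrite repK. Qed.

Definition Tadd (P Q : Tc) := cls (rep P ++ rep Q).
Definition Topp (P : Tc) := cls (negl (rep P)).
Definition T0 := cls [::].

Lemma Tadd_cls s t : Tadd (cls s) (cls t) = cls (s ++ t).
Proof. by apply/cls_eq; apply: teq_cat; apply: rep_cls. Qed.
Lemma Topp_cls s : Topp (cls s) = cls (negl s).
Proof. by apply/cls_eq; apply: teq_neg; apply: rep_cls. Qed.

Lemma TaddA : associative Tadd.
Proof.
move=> P Q S; rewrite -(repK P) -(repK Q) -(repK S) !Tadd_cls.
by rewrite catA.
Qed.
Lemma TaddC : commutative Tadd.
Proof.
move=> P Q; rewrite -(repK P) -(repK Q) !Tadd_cls; apply/cls_eq => A b bb.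
by rewrite !big_cat /= addrC.
Qed.
Lemma Tadd0 : left_id T0 Tadd.
Proof. by move=> P; rewrite -(repK P) /T0 Tadd_cls. Qed.
Lemma TaddN : left_inverse T0 Topp Tadd.
Proof. by move=> P; rewrite -(repK P) Topp_cls Tadd_cls; apply/cls_eq; apply: teq_negK. Qed.

HB.instance Definition _ := GRing.isZmodule.Build Tc TaddA TaddC Tadd0 TaddN.

Lemma cls_cat s t : cls (s ++ t) = cls s + cls t.
Proof. by rewrite -Tadd_cls. Qed.
Lemma cls_nil : cls [::] = 0. Proof. by []. Qed.
Lemma cls_cons p s : cls (p :: s) = cls [:: p] + cls s.
Proof. by rewrite -cls_cat. Qed.
Lemma cls_negl s : cls (negl s) = - cls s.
Proof. by rewrite -Topp_cls. Qed.

Lemma char_bal (A : zmodType) (chi : Tc -> A) :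
  (forall x y, chi (x + y) = chi x + chi y) ->
  balanced (fun n x => chi (cls [:: (n, x)])).
Proof.
move=> chD; split.
- move=> n n' x; rewrite -chD -cls_cat; congr chi; apply/cls_eq => B b [bD _ _].
  by rewrite !big_cons !big_nil /= !addr0 bD.
- move=> n x x'; rewrite -chD -cls_cat; congr chi; apply/cls_eq => B b [_ bD _].
  by rewrite !big_cons !big_nil /= !addr0 bD.
- move=> n r x; congr chi; apply/cls_eq => B b [_ _ bM].
  by rewrite !big_cons !big_nil /= bM.
Qed.

Lemma char_sum (A : zmodType) (chi : Tc -> A) s :
  (forall x y, chi (x + y) = chi x + chi y) ->
  chi (cls s) = \sum_(p <- s) chi (cls [:: (p.1, p.2)]).
Proof.
move=> chD; have ch0 : chi 0 = 0.
  by have := chD 0 0; rewrite addr0 => e; apply: (@addrI _ (chi 0)); rewrite addr0 -e.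
elim: s => [|p s IH]; first by rewrite big_nil cls_nil.
by rewrite cls_cons chD IH big_cons; case: p.
Qed.

End Tens.

Definition is_add (X Y : zmodType) (a : X -> Y) := forall x y, a (x + y) = a x + a y.

Lemma is_add0 (X Y : zmodType) (a : X -> Y) : is_add a -> a 0 = 0.
Proof. by move=> h; have := h 0 0; rewrite addr0 => e; apply: (@addrI _ (a 0)); rewrite addr0 -e. Qed.
Lemma is_addN (X Y : zmodType) (a : X -> Y) x : is_add a -> a (- x) = - a x.
Proof. by move=> h; have := h x (- x); rewrite subrr is_add0 // => e; apply/eqP; rewrite -addr_eq0 addrC -e. Qed.
Lemma is_addB (X Y : zmodType) (a : X -> Y) x y : is_add a -> a (x - y) = a x - a y.
Proof. by move=> h; rewrite h is_addN. Qed.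
Lemma is_add_sum (X Y : zmodType) (a : X -> Y) I (s : seq I) (F : I -> X) : is_add a ->
  a (\sum_(i <- s) F i) = \sum_(i <- s) a (F i).
Proof.
move=> h; elim: s => [|i s IH]; first by rewrite !big_nil is_add0.
by rewrite !big_cons h IH.
Qed.

Lemma ext_along (X Y : zmodType) (h : X -> Y) (a : X -> QZ) : is_add h -> is_add a ->
  (forall x, h x = 0 -> a x = 0) -> exists b : Y -> QZ, is_add b /\ forall x, b (h x) = a x.
Proof.
move=> hh ha hk.
pose S y := exists x, y = h x.
pose d y := if pselect (S y) is left e then a (projT1 (cid e)) else 0.
have dE : forall x, d (h x) = a x.
  move=> x; rewrite /d; case: pselect => [e|]; last by case; exists x.
  case: (cid e) => x' /= ex; apply/eqP; rewrite -subr_eq0 -is_addB //; apply/eqP/hk.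
  by rewrite is_addB // ex subrr.
have sS : subgrp S.
  split; first by exists 0; rewrite is_add0.
  - by move=> _ _ [x ->] [y ->]; exists (x + y); rewrite hh.
  - by move=> _ [x ->]; exists (- x); rewrite is_addN.
have ad : addon S d by move=> _ _ [x ->] [y ->]; rewrite -hh !dE ha.
have [b [bD bS]] := extend sS ad.
exists b; split => // x; rewrite bS ?dE //; by exists x.
Qed.

Lemma lm_act0 (R : nuring) (M : lmodule R) r : lm_act M r 0 = 0.
Proof. by apply: (@is_add0 _ _ (lm_act M r)) => x y; rewrite lm_actDr. Qed.
Lemma lm_actN (R : nuring) (M : lmodule R) r x : lm_act M r (- x) = - lm_act M r x.
Proof. by apply: (@is_addN _ _ (lm_act M r)) => y z; rewrite lm_actDr. Qed.
Lemma rm_act0 (R : nuring) (M : rmodule R) r : rm_act M 0 r = 0.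
Proof. by apply: (@is_add0 _ _ (rm_act M ^~ r)) => x y; rewrite rm_actDl. Qed.
Lemma rm_actN (R : nuring) (M : rmodule R) r x : rm_act M (- x) r = - rm_act M x r.
Proof. by apply: (@is_addN _ _ (rm_act M ^~ r)) => y z; rewrite rm_actDl. Qed.

Definition Hc (R : nuring) (N : rmodule R) := {a : N -> QZ | is_add a}.
HB.instance Definition _ (R : nuring) (N : rmodule R) := gen_eqMixin (Hc N).
HB.instance Definition _ (R : nuring) (N : rmodule R) := gen_choiceMixin (Hc N).

Section H.
Variables (R : nuring) (N : rmodule R).

Lemma Hext (a b : Hc N) : (forall n, sval a n = sval b n) -> a = b.
Proof. by case: a b => a pa [b pb] /= e; apply: eq_exist; apply: funext. Qed.

Definition H0 : Hc N := exist (@is_add N QZ) (fun _ => 0) (fun _ _ => esym (addr0 0)).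
Definition Hadd (a b : Hc N) : Hc N := exist (@is_add N QZ) (fun n => sval a n + sval b n)
  (fun x y => ltac:(by rewrite /= (svalP a) (svalP b) addrACA)).
Definition Hopp (a : Hc N) : Hc N := exist (@is_add N QZ) (fun n => - sval a n)
  (fun x y => ltac:(by rewrite /= (svalP a) opprD)).
Lemma HaddA : associative Hadd. Proof. by move=> a b c; apply: Hext => n /=; rewrite addrA. Qed.
Lemma HaddC : commutative Hadd. Proof. by move=> a b; apply: Hext => n /=; rewrite addrC. Qed.
Lemma Hadd0 : left_id H0 Hadd. Proof. by move=> a; apply: Hext => n /=; rewrite add0r. Qed.
Lemma HaddN : left_inverse H0 Hopp Hadd. Proof. by move=> a; apply: Hext => n /=; rewrite addNr. Qed.
End H.
HB.instance Definition _ (R : nuring) (N : rmodule R) :=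
  GRing.isZmodule.Build (Hc N) (@HaddA R N) (@HaddC R N) (@Hadd0 R N) (@HaddN R N).

Section H2.
Variables (R : nuring) (N : rmodule R).
Lemma Hval_add (a b : Hc N) n : sval (a + b) n = sval a n + sval b n. Proof. by []. Qed.
Lemma Hval0 n : sval (0 : Hc N) n = 0. Proof. by []. Qed.

Definition Hact (r : R) (a : Hc N) : Hc N := exist (@is_add N QZ) (fun n => sval a (rm_act N n r))
  (fun x y => ltac:(by rewrite /= rm_actDl (svalP a))).
Lemma HactA r s a : Hact (nur_mul r s) a = Hact r (Hact s a).
Proof. by apply: Hext => n /=; rewrite rm_actA. Qed.
Lemma HactDl r s a : Hact (r + s) a = Hact r a + Hact s a.
Proof. by apply: Hext => n /=; rewrite rm_actDr (svalP a). Qed.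
Lemma HactDr r a b : Hact r (a + b) = Hact r a + Hact r b.
Proof. by apply: Hext. Qed.
Definition Hmod : lmodule R := @LModule R (Hc N) Hact HactA HactDl HactDr.
End H2.

Lemma tun_lift (R : nuring) (N : rmodule R) (A : zmodType) (b : N -> R -> A) :
  tunital_r N -> @balanced R N (lreg R) A b ->
  exists a : N -> A, is_add a /\ forall n r, a (rm_act N n r) = b n r.
Proof.
move=> [surj inj] bb.
pose rp n := projT1 (cid (surj n)).
have rpE n : n = \sum_(p <- rp n) rm_act N p.1 p.2 by rewrite /rp; case: cid.
pose a n := \sum_(p <- rp n) b p.1 p.2.
have wd : forall n s, n = \sum_(p <- s) rm_act N p.1 p.2 -> a n = \sum_(p <- s) b p.1 p.2.
  move=> n s ns.
  have : \sum_(p <- s ++ @negl R N (lreg R) (rp n)) rm_act N p.1 p.2 = 0.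
    rewrite big_cat /= big_map /= -ns.
    under eq_bigr do rewrite rm_actN.
    by rewrite sumrN -rpE subrr.
  move=> /inj /(_ A b bb); rewrite big_cat /= (sum_negl _ bb) big_nil => /eqP.
  by rewrite subr_eq0 => /eqP.
exists a; split.
  move=> x y; rewrite (wd (x + y) (rp x ++ rp y)); first by rewrite big_cat.
  by rewrite big_cat /= -!rpE.
move=> n r; rewrite (wd _ [:: (n, r)]) ?big_cons ?big_nil ?addr0 //.
Qed.

Lemma H_cunital (R : nuring) (N : rmodule R) : tunital_r N -> cunital (Hmod N).
Proof.
move=> tN; split.
  move=> a ha; apply: Hext => n /=.
  have [s ->] := (let: conj h _ := tN in h) n.
  rewrite (is_add_sum _ _ (svalP a)) big1 // => p _.
  by rewrite -[LHS]/(sval (Hact p.2 a) p.1); rewrite [Hact _ _]ha.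
move=> g [gD gM].
have bb : @balanced R N (lreg R) QZ (fun n r => sval (g r) n).
  split.
  - by move=> n n' x; rewrite (svalP (g x)).
  - by move=> n x x'; rewrite gD.
  - by move=> n r x; rewrite [in RHS]gM.
have [a [aD aM]] := tun_lift tN bb.
exists (exist _ a aD) => r; apply: Hext => n /=; by rewrite aM.
Qed.

Lemma ccok_crit (R : nuring) (P1 P2 C : lmodule R) (f : P1 -> P2) (g : P2 -> C) :
  lhom f -> lhom g -> (forall x, g (f x) = 0) ->
  (forall p, g p = 0 -> forall r, exists x, f x = lm_act P2 r p) ->
  (forall c r, exists p, g p = lm_act C r c) -> is_ccokernel f g.
Proof.
move=> [fD fM] [gD gM] gf kerg img; split => // D h [cD1 cD2] [hD hM] hf.
have uniqD : forall d d' : D, (forall r, lm_act D r d = lm_act D r d') -> d = d'.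
  move=> d d' e; apply/eqP; rewrite -subr_eq0; apply/eqP/cD1 => r.
  by rewrite lm_actDr lm_actN e subrr.
have hker : forall p, g p = 0 -> h p = 0.
  move=> p gp; apply: cD1 => r; have [x fx] := kerg p gp r.
  by rewrite -hM -fx hf.
have hwd : forall p p', g p = g p' -> h p = h p'.
  move=> p p' e; apply/eqP; rewrite -subr_eq0 -(is_addB _ _ hD); apply/eqP/hker.
  by rewrite (is_addB _ _ gD) e subrr.
pose pre c r := projT1 (cid (img c r)).
have preE c r : g (pre c r) = lm_act C r c by rewrite /pre; case: cid.
pose G c r := h (pre c r).
have GE : forall c r p, g p = lm_act C r c -> G c r = h p.
  by move=> c r p e; apply: hwd; rewrite preE e.
have Glhom : forall c, @lhom R (lreg R) D (G c).
  move=> c; split.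
    move=> r s; rewrite (GE c (r + s) (pre c r + pre c s)) ?hD //.
    by rewrite gD !preE lm_actDl.
  move=> r s; rewrite (GE c _ (lm_act P2 r (pre c s))) ?hM //.
  by rewrite gM preE /= lm_actA.
pose u c := projT1 (cid (cD2 (G c) (Glhom c))).
have uE c r : G c r = lm_act D r (u c) by rewrite /u; case: cid.
exists u; split.
- split.
    move=> c c'; apply: uniqD => r; rewrite lm_actDr -!uE.
    rewrite (GE _ _ (pre c r + pre c' r)) ?hD // gD !preE lm_actDr //.
  move=> r c; apply: uniqD => s; rewrite -lm_actA -!uE.
  by apply: GE; rewrite preE lm_actA.
- move=> p; apply: uniqD => r; rewrite -uE -hM; apply: GE; by rewrite gM.
- move=> u' [u'D u'M] u'g c; apply: uniqD => r; rewrite -uE -u'M.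
  by rewrite -preE u'g.
Qed.

Section Main.
Variables (R : nuring) (N1 N2 K : rmodule R) (f : N1 -> N2) (k : K -> N1).
Hypotheses (tR : tunital_ring R) (hf : rhom f) (hk : rhom k) (ker : is_tkernel f k).

Lemma tR_r : tunital_r (rreg R). Proof. exact: tR. Qed.

Lemma kerK1 x : k x = 0 -> forall r, rm_act K x r = 0.
Proof.
move=> kx r.
have h0 : @rhom R (rreg R) N1 (fun _ => 0).
  by split => [x1 y1|m s]; rewrite ?addr0 ?rm_act0.
have [u [_ _ uniq]] := (let: conj _ h := ker in h) (rreg R) (fun _ => 0) tR_r h0
   (fun _ => is_add0 (let: conj h _ := hf in h)).
have h1 : @rhom R (rreg R) K (fun s => rm_act K x s).
  by split => [s t|s t]; rewrite ?rm_actDr //= rm_actA.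
have h2 : @rhom R (rreg R) K (fun _ => 0).
  by split => [x1 y1|m s]; rewrite ?addr0 ?rm_act0.
have e1 := uniq _ h1 (fun s => ltac:(by rewrite (let: conj _ h := hk in h) kx rm_act0)) r.
have e2 := uniq _ h2 (fun s => ltac:(by rewrite (is_add0 (let: conj h _ := hk in h)))) r.
by rewrite e1 -e2.
Qed.

Lemma kerK2 y : f y = 0 -> forall r, exists x, k x = rm_act N1 y r.
Proof.
move=> fy r.
have h1 : @rhom R (rreg R) N1 (fun s => rm_act N1 y s).
  by split => [s t|s t]; rewrite ?rm_actDr //= rm_actA.
have [u [_ ku _]] := (let: conj _ h := ker in h) (rreg R) _ tR_r h1
   (fun s => ltac:(by rewrite (let: conj _ h := hf in h) fy rm_act0)).
by exists (u r).
Qed.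

Definition Hpre (M1 M2 : rmodule R) (h : M1 -> M2) (ha : is_add h) (a : Hc M2) : Hc M1 :=
  exist (@is_add M1 QZ) (fun n => sval a (h n)) (fun x y => ltac:(by rewrite /= ha (svalP a))).

Lemma Hpre_lhom (M1 M2 : rmodule R) (h : M1 -> M2) (ha : is_add h)
  (hM : forall m r, h (rm_act M1 m r) = rm_act M2 (h m) r) :
  @lhom R (Hmod M2) (Hmod M1) (Hpre ha).
Proof.
split; first by move=> a b; apply: Hext.
by move=> r a; apply: Hext => n /=; rewrite hM.
Qed.

Let fA : is_add f := let: conj h _ := hf in h.
Let kA : is_add k := let: conj h _ := hk in h.

Lemma cok_main : @is_ccokernel R (Hmod N2) (Hmod N1) (Hmod K) (Hpre fA) (Hpre kA).
Proof.
apply: ccok_crit.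
- by apply: Hpre_lhom; case: hf.
- by apply: Hpre_lhom; case: hk.
- move=> a; apply: Hext => x /=; rewrite (let: conj h _ := ker in h).
  exact: (is_add0 (svalP a)).
- move=> b gb r.
  have aA : is_add (fun n => sval b (rm_act N1 n r)).
    by move=> x y; rewrite /= rm_actDl (svalP b).
  have [c [cA cE]] := ext_along fA aA (fun n fn =>
     let: ex_intro x kx := kerK2 fn r in
     ltac:(by rewrite -kx -[LHS]/(sval (Hpre kA b) x) gb)).
  by exists (exist _ c cA); apply: Hext => n /=.
- move=> a r.
  have aA : is_add (fun x => sval a (rm_act K x r)).
    by move=> x y; rewrite /= rm_actDl (svalP a).
  have [c [cA cE]] := ext_along kA aA (fun x kx =>
     ltac:(by rewrite /= (kerK1 kx r) (is_add0 (svalP a)))).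
  by exists (exist _ c cA); apply: Hext => n /=.
Qed.

End Main.

Lemma hom_bal (R : nuring) (N : rmodule R) (Q : lmodule R) (phi : Q -> Hmod N) :
  lhom phi -> @balanced R N Q QZ (fun n q => sval (phi q) n).
Proof.
case=> pD pM; split.
- by move=> n n' x; rewrite (svalP (phi x)).
- by move=> n x x'; rewrite pD.
- by move=> n r x; rewrite pM.
Qed.

Theorem proposition8p21 (R : nuring) (Q : lmodule R) :
  tunital_ring R -> cprojective Q -> tflat Q.
Proof.
move=> tR cpQ N1 N2 K f k tN1 tN2 tK hf hk ker.
pose fA : is_add f := let: conj h _ := hf in h.
pose kA : is_add k := let: conj h _ := hk in h.
have lf := Hpre_lhom fA (let: conj _ h := hf in h).
have lk := Hpre_lhom kA (let: conj _ h := hk in h).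
have cok := cok_main tR hf hk ker.
have [lift _ exa] := cpQ _ _ _ _ _ (H_cunital tN2) (H_cunital tN1) (H_cunital tK) lf lk cok.
split.
- move=> s hs A b bb; apply: contrapT => nz.
  pose v := \sum_(p <- s) b p.1 p.2.
  have sI : subgrp (fun z : A => z = 0).
    by split => [|x y -> ->|x ->]; rewrite ?addr0 ?oppr0.
  have nIv : ~ v = 0 by move=> v0; apply: nz; rewrite big_nil.
  have [chi [chD chI chv]] := separate sI nIv.
  have [bD bD' bM] := bb.
  pose psi (q : Q) : Hmod K := exist (@is_add K QZ) (fun x => chi (b x q))
    (fun x y => ltac:(by rewrite /= bD chD)).
  have lpsi : lhom psi.
    split; first by move=> q q'; apply: Hext => x /=; rewrite bD' chD.
    by move=> r q; apply: Hext => x /=; rewrite -bM.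
  have [phi [lphi phiE]] := lift psi lpsi.
  have := hs QZ _ (hom_bal lphi); rewrite big_map big_nil /= => h0.
  apply: chv; rewrite /v (is_add_sum _ _ chD) -[RHS]h0; apply: eq_bigr => p _.
  by rewrite -[RHS]/(sval (Hpre kA (phi p.2)) p.1) phiE.
- move=> s A b bb; rewrite big_map big_nil big1 // => p _ /=.
  by rewrite (let: conj h _ := ker in h) bal0l.
- move=> t ht; apply: contrapT => ne.
  pose I (z : Tc N1 Q) := exists s : seq (K * Q), z = cls [seq (k p.1, p.2) | p <- s].
  have sI : subgrp I.
    split.
    + by exists [::].
    + move=> _ _ [s1 ->] [s2 ->]; exists (s1 ++ s2); by rewrite map_cat cls_cat.
    + move=> _ [s1 ->]; exists [seq (- p.1, p.2) | p <- s1].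
      rewrite -cls_negl /negl -!map_comp; congr cls; apply: eq_map => p /=.
      by rewrite (is_addN _ kA).
  have nIt : ~ I (cls t).
    move=> [s /cls_eq e]; apply: ne; exists s; exact: teq_sym.
  have [chi [chD chI cht]] := separate sI nIt.
  have [cD1 cD2 cM] := char_bal chD.
  pose phi (q : Q) : Hmod N1 := exist (@is_add N1 QZ) (fun n => chi (cls [:: (n, q)]))
    (fun x y => cD1 x y q).
  have lphi : lhom phi.
    split; first by move=> q q'; apply: Hext => x /=; rewrite cD2.
    by move=> r q; apply: Hext => x /=; rewrite -cM.
  have gphi : forall q, Hpre kA (phi q) = 0.
    move=> q; apply: Hext => x /=; apply: chI; by exists [:: (x, q)].
  have [chi' [lchi' chi'E]] := exa phi lphi gphi.
  have := ht QZ _ (hom_bal lchi'); rewrite big_map big_nil /= => h0.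
  apply: cht; rewrite (char_sum _ chD) -[RHS]h0; apply: eq_bigr => p _.
  by rewrite -[RHS]/(sval (Hpre fA (chi' p.2)) p.1) chi'E.
Qed.
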